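(* There is a one-to-one correspondence between strict $2$-term Nijenhuis $\mathcal L_\infty$-conformal algebras and crossed modules of Nijenhuis Lie conformal algebras.
   Context: All spaces are over $\mathbb C$. A Lie conformal algebra is a $\mathbb C[\partial]$-module with a $\mathbb C$-bilinear $\lambda$-bracket satisfying $[\partial a_\lambda b]=-\lambda[a_\lambda b]$, $[a_\lambda\partial b]=(\partial+\lambda)[a_\lambda b]$, $[a_\lambda b]=-[b_{-\partial-\lambda}a]$, $[a_\lambda[b_\mu c]]=[[a_\lambda b]_{\lambda+\mu}c]+[b_\mu[a_\lambda c]]$. A Nijenhuis operator is a $\mathbb C[\partial]$-linear $\mathcal N$ with $[\mathcal N(p)_\lambda\mathcal N(q)]=\mathcal N([\mathcal N(p)_\lambda q]+[p_\lambda\mathcal N(q)]-\mathcal N([p_\lambda q]))$; a Nijenhuis Lie conformal algebra is a Lie conformal algebra with a Nijenhuis operator; morphisms are bracket-preserving $\mathbb C[\partial]$-linear maps intertwining the operators. A conformal representation $\rho:\mathcal L\otimes\mathcal M\to\mathcal M[\lambda]$ satisfies $\rho(\partial p)_\lambda=-\lambda\rho(p)_\lambda$, $\rho(p)_\lambda\partial m=(\partial+\lambda)\rho(p)_\lambda m$, $\rho(p)_\lambda\rho(q)_\mu m-\rho(q)_\mu\rho(p)_\lambda m=\rho([p_\lambda q])_{\lambda+\mu}m$; a representation of a Nijenhuis Lie conformal algebra $(\mathcal L,[\cdot_\lambda\cdot],\mathcal N)$ is $(\mathcal M,\rho,\mathcal N_{\mathcal M})$ with $\mathcal N_{\mathcal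 M}$ $\mathbb C[\partial]$-linear and $\rho(\mathcal N(p))_\lambda\mathcal N_{\mathcal M}(m)=\mathcal N_{\mathcal M}(\rho(\mathcal N(p))_\lambda m+\rho(p)_\lambda\mathcal N_{\mathcal M}(m)-\mathcal N_{\mathcal M}(\rho(p)_\lambda m))$. A crossed module of Nijenhuis Lie conformal algebras is a quadruple $(\mathcal L_{0\,\mathcal N_0},\mathcal L_{1\,\mathcal N_1},t,\rho)$: two Nijenhuis Lie conformal algebras, a morphism $t:\mathcal L_{1\,\mathcal N_1}\to\mathcal L_{0\,\mathcal N_0}$, and a conformal sesquilinear $\rho:\mathcal L_0\otimes\mathcal L_1\to\mathcal L_1[\lambda]$ making $(\mathcal L_1,\rho,\mathcal N_1)$ a representation of $\mathcal L_{0\,\mathcal N_0}$, with $t(\rho(p)_\lambda m)=[p_\lambda t(m)]_{\mathcal L_0}$ and $\rho(t(m))_\lambda n=[m_\lambda n]_{\mathcal L_1}$. A strict $2$-term Nijenhuis $\mathcal L_\infty$-conformal algebra consists of a $\mathbb C[\partial]$-linear map $d:\mathcal L_1\to\mathcal L_0$ of $\mathbb C[\partial]$-modules, conformal sesquilinear $\mathbb C$-bilinear brackets $\llbracket\cdot_\lambda\cdot\rrbracket$: $\mathcal L_0\otimes\mathcal L_0\to\mathcal L_0[\lambda]$, $\mathcal L_0\otimes\mathcal L_1\to\mathcal L_1[\lambda]$, $\mathcal L_1\otimes\mathcal L_0\to\mathcal L_1[\lambda]$ (with $\llbracket m_\lambda n\rrbracket=0$ for $m,n\in\mathcal L_1$),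 and $\mathbb C[\partial]$-linear maps $\mathcal N_0:\mathcal L_0\to\mathcal L_0$, $\mathcal N_1:\mathcal L_1\to\mathcal L_1$, such that for all $p,q,r\in\mathcal L_0$, $m,n\in\mathcal L_1$: $\llbracket p_\lambda m\rrbracket=-\llbracket m_{-\partial-\lambda}p\rrbracket$; $\llbracket p_\lambda q\rrbracket=-\llbracket q_{-\partial-\lambda}p\rrbracket$; $d\llbracket p_\lambda m\rrbracket=\llbracket p_\lambda d(m)\rrbracket$; $\llbracket d(m)_\lambda n\rrbracket=\llbracket m_\lambda d(n)\rrbracket$; $\llbracket p_\lambda\llbracket q_\mu r\rrbracket\rrbracket-\llbracket\llbracket p_\lambda q\rrbracket_{\lambda+\mu}r\rrbracket-\llbracket q_\mu\llbracket p_\lambda r\rrbracket\rrbracket=0$; $\llbracket p_\lambda\llbracket q_\mu m\rrbracket\rrbracket-\llbracket\llbracket p_\lambda q\rrbracket_{\lambda+\mu}m\rrbracket-\llbracket q_\mu\llbracket p_\lambda m\rrbracket\rrbracket=0$; $d\circ\mathcal N_1=\mathcal N_0\circ d$; $\mathcal N_0(\llbracket\mathcal N_0(p)_\lambda q\rrbracket+\llbracket p_\lambda\mathcal N_0(q)\rrbracket-\mathcal N_0\llbracket p_\lambda q\rrbracket)=\llbracket\mathcal N_0(p)_\lambda\mathcal N_0(q)\rrbracket$; $\mathcal N_1(\llbracket\mathcal N_0(p)_\lambda m\rrbracket+\llbracket p_\lambda\mathcal N_1(m)\rrbracket-\mathcal N_1\llbracket p_\lambda m\rrbracket)=\llbracket\mathcal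 N_0(p)_\lambda\mathcal N_1(m)\rrbracket$. (It is the special case $l_3=0$, $\mathcal N_2=0$ of a $2$-term $\mathcal L_\infty$-conformal algebra with homotopy Nijenhuis operator.) *)

(* Defs.v *)
From HB Require Import structures.
From mathcomp Require Import all_boot all_order all_algebra.
From mathcomp Require Import complex.
From mathcomp Require Import reals.
Set Implicit Arguments. Unset Strict Implicit. Unset Printing Implicit Defensive.
Import Order.TTheory GRing.Theory Num.Theory.
Local Open Scope ring_scope.

(* Conventions:
   - a C[∂]-module is a C-vector space V (lmodType F) together with a C-linear
     endomorphism dV : V -> V (the action of ∂);
   - an element of W[λ] is encoded by its coefficient sequence c : nat -> W,
     c n being the coefficient of λ^n (finitely supported);
   - a λ-bracket U ⊗ V -> W[λ] is a map b : U -> V -> nat -> W,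
     [u_λ v] = \sum_n λ^n b u v n. *)

Section Defs.
Variable F : fieldType.

Definition Clinear (V W : lmodType F) (f : V -> W) :=
  forall (c : F) (x y : V), f (c *: x + y) = c *: f x + f y.

Definition dmodule (V : lmodType F) (dV : V -> V) := Clinear dV.

Definition dlinear (V W : lmodType F) (dV : V -> V) (dW : W -> W) (f : V -> W) :=
  Clinear f /\ forall x, f (dV x) = dW (f x).

Definition br_bilinear (U V W : lmodType F) (b : U -> V -> nat -> W) :=
  (forall (c : F) (x y : U) (v : V) n, b (c *: x + y) v n = c *: b x v n + b y v n) /\
  (forall (u : U) (c : F) (x y : V) n, b u (c *: x + y) n = c *: b u x n + b u y n).

Definition br_finsupp (U V W : lmodType F) (b : U -> V -> nat -> W) :=
  forall u v, exists N, forall n, (N <= n)%N -> b u v n = 0.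

Definition lam_mul (W : lmodType F) (c : nat -> W) (n : nat) : W :=
  if n is n'.+1 then c n' else 0.

Definition sesquilinear (U V W : lmodType F) (dU : U -> U) (dV : V -> V)
  (dW : W -> W) (b : U -> V -> nat -> W) :=
  (forall u v n, b (dU u) v n = - lam_mul (b u v) n) /\
  (forall u v n, b u (dV v) n = dW (b u v n) + lam_mul (b u v) n).

(* coefficient of λ^k in  c(-∂-λ) = \sum_n (-∂-λ)^n c_n, where N bounds the
   support of c:  \sum_{n<N} (-1)^n binom(n,k) ∂^(n-k) c_n *)
Definition subst_mdl (W : lmodType F) (dW : W -> W) (c : nat -> W) (N k : nat) : W :=
  \sum_(n < N) (((-1) ^+ n * ('C(n, k))%:R) *: iter (n - k) dW (c n)).

Definition skew_rel (U V W : lmodType F) (dW : W -> W)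
  (b : U -> V -> nat -> W) (b' : V -> U -> nat -> W) :=
  forall u v N, (forall n, (N <= n)%N -> b' v u n = 0) ->
    forall k, b u v k = - subst_mdl dW (b' v u) N k.

(* Jacobi-type identity
   [p_λ [q_μ x]] = [[p_λ q]_{λ+μ} x] + [q_μ [p_λ x]],
   compared on the coefficient of λ^n μ^m. *)
Definition jacobi_gen (A X : lmodType F) (bA : A -> A -> nat -> A)
  (act : A -> X -> nat -> X) :=
  forall p q x n m,
    act p (act q x m) n =
      \sum_(j < n.+1) (('C(n - j + m, m))%:R *: act (bA p q j) x (n - j + m))
      + act q (act p x n) m.

Definition nijenhuis_gen (A X : lmodType F) (act : A -> X -> nat -> X)
  (NA : A -> A) (NX : X -> X) :=
  forall p x n,
    act (NA p) (NX x) n = NX (act (NA p) x n + act p (NX x) n - NX (act p x n)).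

Definition LieConf (L : lmodType F) (dL : L -> L) (b : L -> L -> nat -> L) :=
  [/\ dmodule dL, br_bilinear b, br_finsupp b, sesquilinear dL dL dL b
    & skew_rel dL b b /\ jacobi_gen b b].

Definition NijenhuisOp (L : lmodType F) (dL : L -> L) (b : L -> L -> nat -> L)
  (N : L -> L) :=
  dlinear dL dL N /\ nijenhuis_gen b N N.

Definition NijLieConf (L : lmodType F) (dL : L -> L) (b : L -> L -> nat -> L)
  (N : L -> L) :=
  LieConf dL b /\ NijenhuisOp dL b N.

Definition NijLieConf_morph (L M : lmodType F) (dL : L -> L) (dM : M -> M)
  (bL : L -> L -> nat -> L) (bM : M -> M -> nat -> M) (NL : L -> L) (NM : M -> M)
  (f : L -> M) :=
  [/\ dlinear dL dM f, (forall x y n, f (bL x y n) = bM (f x) (f y) n)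
    & forall x, f (NL x) = NM (f x)].

Definition ConfRep (L M : lmodType F) (dL : L -> L) (dM : M -> M)
  (bL : L -> L -> nat -> L) (rho : L -> M -> nat -> M) :=
  [/\ dmodule dM, br_bilinear rho, br_finsupp rho, sesquilinear dL dM dM rho
    & jacobi_gen bL rho].

Definition NijRep (L M : lmodType F) (dL : L -> L) (dM : M -> M)
  (bL : L -> L -> nat -> L) (NL : L -> L) (rho : L -> M -> nat -> M) (NM : M -> M) :=
  [/\ ConfRep dL dM bL rho, dlinear dM dM NM & nijenhuis_gen rho NL NM].

Definition NijCrossedModule (L0 L1 : lmodType F) (dL0 : L0 -> L0) (dL1 : L1 -> L1)
  (b0 : L0 -> L0 -> nat -> L0) (N0 : L0 -> L0)
  (b1 : L1 -> L1 -> nat -> L1) (N1 : L1 -> L1)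
  (t : L1 -> L0) (rho : L0 -> L1 -> nat -> L1) :=
  [/\ NijLieConf dL0 b0 N0, NijLieConf dL1 b1 N1,
      NijLieConf_morph dL1 dL0 b1 b0 N1 N0 t,
      NijRep dL0 dL1 b0 N0 rho N1
    & (forall p m n, t (rho p m n) = b0 p (t m) n) /\
      (forall m m' n, rho (t m) m' n = b1 m m' n)].

(* strict 2-term Nijenhuis L_oo-conformal algebra, with data
   d : L1 -> L0, brackets b0 : L0⊗L0 -> L0[λ], rho : L0⊗L1 -> L1[λ],
   rho' : L1⊗L0 -> L1[λ] (the bracket on L1⊗L1 being zero), N0, N1. *)
Definition Strict2NijLinf (L0 L1 : lmodType F) (dL0 : L0 -> L0) (dL1 : L1 -> L1)
  (d : L1 -> L0) (b0 : L0 -> L0 -> nat -> L0)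
  (rho : L0 -> L1 -> nat -> L1) (rho' : L1 -> L0 -> nat -> L1)
  (N0 : L0 -> L0) (N1 : L1 -> L1) :=
  [/\ [/\ dmodule dL0, dmodule dL1, dlinear dL1 dL0 d,
          dlinear dL0 dL0 N0 & dlinear dL1 dL1 N1],
      [/\ br_bilinear b0, br_bilinear rho & br_bilinear rho'] /\
      [/\ br_finsupp b0, br_finsupp rho & br_finsupp rho'],
      [/\ sesquilinear dL0 dL0 dL0 b0, sesquilinear dL0 dL1 dL1 rho
        & sesquilinear dL1 dL0 dL1 rho'],
      [/\ skew_rel dL1 rho rho', skew_rel dL0 b0 b0,
          (forall p m n, d (rho p m n) = b0 p (d m) n)
        & (forall m m' n, rho (d m) m' n = rho' m (d m') n)]
    & [/\ jacobi_gen b0 b0, jacobi_gen b0 rho, (forall m, d (N1 m) = N0 (d m)),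
          nijenhuis_gen b0 N0 N0 & nijenhuis_gen rho N0 N1]].

End Defs.

(* Main.v *)
Require Import Defs.
From mathcomp Require Import complex reals.
From HB Require Import structures.
From mathcomp Require Import all_boot all_order all_algebra.
From mathcomp Require Import ring zify.
Import Order.TTheory GRing.Theory Num.Theory.
Local Open Scope ring_scope.
Set Implicit Arguments. Unset Strict Implicit. Unset Printing Implicit Defensive.
From Stdlib Require Import FunctionalExtensionality.

Section Lin.
Variable F : fieldType.
Variables V W : lmodType F.
Variable f : V -> W.
Hypothesis Hf : Clinear f.

Lemma cl0 : f 0 = 0.
Proof.
have := Hf 1 0 0; rewrite !scale1r !addr0 => h.
by apply: (addrI (f 0)); rewrite addr0 -h.
Qed.
Lemma clD x y : f (x + y) = f x + f y.
Proof. by have := Hf 1 x y; rewrite !scale1r. Qed.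
Lemma clZ c x : f (c *: x) = c *: f x.
Proof. by have := Hf c x 0; rewrite !addr0 cl0 addr0. Qed.
Lemma clN x : f (- x) = - f x.
Proof. by rewrite -scaleN1r clZ scaleN1r. Qed.
Lemma clsum n (g : 'I_n -> V) : f (\sum_(i < n) g i) = \sum_(i < n) f (g i).
Proof. exact: (big_morph f clD cl0). Qed.
End Lin.

Lemma iter_cl (F : fieldType) (W : lmodType F) (f : W -> W) j :
  Clinear f -> Clinear (iter j f).
Proof.
move=> Hf; elim: j => [|j IH] c x y //=.
by rewrite IH Hf.
Qed.

Lemma alt_bin (F : fieldType) j : forall M k, (j < M)%N ->
  \sum_(n < M) ((-1) ^+ n * ('C(j, n))%:R * ('C(n, k))%:R : F) =
  if j == k then (-1) ^+ k else 0.
Proof.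
elim: j => [|j IH] [|M] k // hM.
  rewrite big_ord_recl big1 => [|i _]; last by rewrite /bump /= bin0n mulr0 mul0r.
  by rewrite addr0 /= bin0 bin0n expr0 !mul1r; case: k.
have IH1 := IH M.+1 k (leqW hM).
rewrite big_ord_recl /= in IH1.
rewrite big_ord_recl /=.
under eq_bigr do rewrite /bump leq0n add1n binS natrD mulrDr mulrDl.
rewrite big_split /= addrA bin0.
rewrite bin0 in IH1.
move: IH1; under eq_bigr do rewrite /bump leq0n add1n; move=> IH1.
rewrite IH1; clear IH1.
case: k => [|k].
  under eq_bigr do rewrite !bin0 exprS.
  have -> : \sum_(i < M) (-1 * (-1) ^+ i * ('C(j, i))%:R * 1 : F) =
            - \sum_(i < M) ((-1) ^+ i * ('C(j, i))%:R * ('C(i, 0))%:R) by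
    rewrite -sumrN; apply: eq_bigr => i _; rewrite bin0; ring.
  by rewrite (IH M 0 hM) subrr.
under eq_bigr do rewrite binS natrD exprS.
have IH2 := IH M k.+1 hM.
have IH3 := IH M k hM.
have -> : \sum_(i < M) (-1 * (-1) ^+ i * ('C(j, i))%:R * (('C(i, k.+1))%:R + ('C(i, k))%:R) : F) =
   - \sum_(i < M) ((-1) ^+ i * ('C(j, i))%:R * ('C(i, k.+1))%:R)
   - \sum_(i < M) ((-1) ^+ i * ('C(j, i))%:R * ('C(i, k))%:R).
  rewrite -!sumrN -big_split; apply: eq_bigr => i _ /=; ring.
rewrite IH2 IH3 eqSS addrA subrr add0r.
by case: (j == k); rewrite ?oppr0 // exprS mulN1r.
Qed.

Section Subst.
Variable F : fieldType.
Variable W : lmodType F.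
Variable dW : W -> W.
Hypothesis HdW : Clinear dW.

Notation sb := (subst_mdl dW).

Lemma subst_eq c c' N k : (forall n, c n = c' n) -> sb c N k = sb c' N k.
Proof. by move=> H; rewrite /subst_mdl; apply: eq_bigr => i _; rewrite H. Qed.

Lemma subst_ext c N M k : (forall n, (N <= n)%N -> c n = 0) -> (N <= M)%N ->
  sb c M k = sb c N k.
Proof.
move=> Hc NM; rewrite /subst_mdl (big_ord_widen M (fun n => ((-1) ^+ n * ('C(n, k))%:R) *: iter (n - k) dW (c n)) NM) [RHS]big_mkcond /=.
apply: eq_bigr => i _; case: ifP => // /negbT; rewrite -leqNgt => /Hc ->.
by rewrite (cl0 (iter_cl _ HdW)) scaler0.
Qed.

Lemma subst_supp c N k : (forall n, (N <= n)%N -> c n = 0) -> (N <= k)%N ->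
  sb c N k = 0.
Proof.
move=> Hc Hk; apply: big1 => i _.
by rewrite bin_small ?mulr0 ?scale0r //; apply: leq_trans (ltn_ord i) Hk.
Qed.

Lemma subst_lin a c e N k :
  sb (fun n => a *: c n + e n) N k = a *: sb c N k + sb e N k.
Proof.
rewrite /subst_mdl scaler_sumr -big_split; apply: eq_bigr => i _ /=.
by rewrite (iter_cl _ HdW) scalerDr !scalerA mulrC.
Qed.

Lemma subst_opp c N k : sb (fun n => - c n) N k = - sb c N k.
Proof.
rewrite /subst_mdl -sumrN; apply: eq_bigr => i _.
by rewrite (clN (iter_cl _ HdW)) scalerN.
Qed.

Lemma iter_comm j x : iter j dW (dW x) = dW (iter j dW x).
Proof. by rewrite -iterSr. Qed.

Lemma subst_d c N k : sb (fun n => dW (c n)) N k = dW (sb c N k).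
Proof.
rewrite /subst_mdl (clsum HdW); apply: eq_bigr => i _.
by rewrite (clZ HdW) iter_comm.
Qed.

Lemma subst_lam c N k : (forall n, (N <= n)%N -> c n = 0) ->
  sb (lam_mul c) N.+1 k = - dW (sb c N k) - lam_mul (sb c N) k.
Proof.
move=> Hc; rewrite /subst_mdl big_ord_recl /= scaler0 add0r.
rewrite (clsum HdW) -sumrN.
under eq_bigr do rewrite /bump leq0n add1n add0n.
case: k => [|k] /=.
  rewrite subr0; apply: eq_bigr => i _ /=.

  by rewrite !bin0 !mulr1 !subn0 (clZ HdW) exprS mulN1r scaleNr.
rewrite -sumrB; apply: eq_bigr => i _ /=.
rewrite subSS (clZ HdW) binS.
case: (leqP k.+1 i) => hi.
  have -> : (i - k = (i - k.+1).+1)%N by lia.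
  rewrite iterS -!scaleNr -scalerDl; congr (_ *: _).
  rewrite exprS natrD; ring.
rewrite (bin_small hi).
have -> : (i - k.+1 = 0)%N by lia.
have -> : (i - k = 0)%N by lia.
rewrite /= mulr0 scale0r oppr0 add0r -scaleNr; congr (_ *: _).
rewrite exprS add0n; ring.
Qed.

Lemma subst_inv c N k : (forall n, (N <= n)%N -> c n = 0) ->
  sb (fun j => sb c N j) N k = c k.
Proof.
move=> Hc; case: (ltnP k N) => hk; last first.
  rewrite subst_supp ?Hc // => n hn; exact: subst_supp.
rewrite /subst_mdl.
under eq_bigr => n _ do rewrite (clsum (iter_cl _ HdW)) scaler_sumr.
rewrite exchange_big /=.
have E : forall n j : 'I_N,
  ((-1) ^+ n * ('C(n, k))%:R) *: iter (n - k) dW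
     (((-1) ^+ j * ('C(j, n))%:R) *: iter (j - n) dW (c j)) =
  ((-1) ^+ j * ((-1) ^+ n * ('C(j, n))%:R * ('C(n, k))%:R)) *: iter (j - k) dW (c j).
  move=> n j; rewrite (clZ (iter_cl _ HdW)) scalerA -iterD.
  case: (leqP k n) => h1; last by rewrite (bin_small h1) !(mulr0, mul0r) !scale0r.
  case: (leqP n j) => h2; last by rewrite (bin_small h2) !(mulr0, mul0r) !scale0r.
  have -> : (n - k + (j - n) = j - k)%N by lia.
  congr (_ *: _); ring.
under eq_bigr => j _ do under eq_bigr => n _ do rewrite E.
under eq_bigr => j _ do rewrite -scaler_suml -mulr_sumr (alt_bin _ _ (ltn_ord j)).
rewrite (bigD1 (Ordinal hk)) //= big1 => [|j hj].
  rewrite eqxx -exprMn mulrNN mul1r expr1n scale1r subnn /= addr0 //.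
case: eqP => [e|_]; last by rewrite mulr0 scale0r.
by move: hj; rewrite -val_eqE /= e eqxx.
Qed.

Lemma subst_add c e N k : sb (fun n => c n + e n) N k = sb c N k + sb e N k.
Proof.
rewrite -[sb c N k]scale1r -subst_lin; apply: subst_eq => n; by rewrite scale1r.
Qed.

Variables U V : lmodType F.
Variable dU : U -> U.
Variable dV : V -> V.

Lemma skew_flip (b : U -> V -> nat -> W) (b' : V -> U -> nat -> W) :
  br_finsupp b' -> skew_rel dW b b' -> skew_rel dW b' b.
Proof.
move=> fs sk v u N hN k; have [N0 h0] := fs v u.
have hM : forall n, (maxn N0 N <= n)%N -> b' v u n = 0.
  by move=> n; rewrite geq_max => /andP[/h0 ->].
rewrite -(@subst_ext _ N (maxn N0 N) k hN (leq_maxr N0 N)).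
rewrite (@subst_eq _ (fun j => - sb (b' v u) (maxn N0 N) j)); last by move=> n; apply: sk.
by rewrite subst_opp subst_inv // opprK.
Qed.

Lemma skew_finsupp (b : U -> V -> nat -> W) (b' : V -> U -> nat -> W) :
  skew_rel dW b' b -> br_finsupp b -> br_finsupp b'.
Proof.
move=> sk fs v u; have [N h] := fs u v; exists N => n hn.
by rewrite (sk v u N h n) subst_supp ?oppr0.
Qed.

Lemma skew_bilin (b : U -> V -> nat -> W) (b' : V -> U -> nat -> W) :
  br_bilinear b -> br_finsupp b -> skew_rel dW b' b -> br_bilinear b'.
Proof.
move=> [bl1 bl2] fs sk; split.
  move=> c x y v n; have [Nx hx] := fs v x; have [Ny hy] := fs v y.
  have hx' : forall m, (maxn Nx Ny <= m)%N -> b v x m = 0.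
    by move=> m; rewrite geq_max => /andP[/hx ->].
  have hy' : forall m, (maxn Nx Ny <= m)%N -> b v y m = 0.
    by move=> m; rewrite geq_max => /andP[_ /hy ->].
  have hM : forall m, (maxn Nx Ny <= m)%N -> b v (c *: x + y) m = 0.
    by move=> m hm; rewrite bl2 hx' ?hy' ?scaler0 ?addr0.
  rewrite (sk _ _ _ hM) (sk _ _ _ hx') (sk _ _ _ hy').
  rewrite (@subst_eq _ (fun m => c *: b v x m + b v y m)) ?subst_lin ?scalerN ?opprD //.
move=> u c x y n; have [Nx hx] := fs x u; have [Ny hy] := fs y u.
have hx' : forall m, (maxn Nx Ny <= m)%N -> b x u m = 0.
  by move=> m; rewrite geq_max => /andP[/hx ->].
have hy' : forall m, (maxn Nx Ny <= m)%N -> b y u m = 0.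
  by move=> m; rewrite geq_max => /andP[_ /hy ->].
have hM : forall m, (maxn Nx Ny <= m)%N -> b (c *: x + y) u m = 0.
  by move=> m hm; rewrite bl1 hx' ?hy' ?scaler0 ?addr0.
rewrite (sk _ _ _ hM) (sk _ _ _ hx') (sk _ _ _ hy').
rewrite (@subst_eq _ (fun m => c *: b x u m + b y u m)) ?subst_lin ?scalerN ?opprD //.

Qed.

Lemma skew_sesq (b : U -> V -> nat -> W) (b' : V -> U -> nat -> W) :
  sesquilinear dU dV dW b -> br_finsupp b -> skew_rel dW b' b ->
  sesquilinear dV dU dW b'.
Proof.
move=> [s1 s2] fs sk; split.
  move=> v u n; have [N hN] := fs u v.
  have h1 : forall m, (N.+1 <= m)%N -> b u (dV v) m = 0.
    move=> [|m] // hm; rewrite s2 hN ?(cl0 HdW) ?add0r //=; first by rewrite hN.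
    exact: ltnW.
  rewrite (sk _ _ _ h1 n) (@subst_eq _ (fun m => dW (b u v m) + lam_mul (b u v) m)) //.
  rewrite subst_add subst_d subst_lam // (@subst_ext _ N N.+1 n hN (leqnSn N)).
  rewrite addrA subrr add0r opprK.
  case: n => [|n] /=; first by rewrite oppr0.
  by rewrite (sk v u N hN n) opprK.
move=> v u n; have [N hN] := fs u v.
have h2 : forall m, (N.+1 <= m)%N -> b (dU u) v m = 0.
  move=> [|m] // hm; by rewrite s1 /= hN ?oppr0.
rewrite (sk _ _ _ h2 n) (@subst_eq _ (fun m => - lam_mul (b u v) m)) //.
rewrite subst_opp opprK subst_lam // (sk v u N hN n) (clN HdW).
case: n => [|n] /=; first by rewrite oppr0 addr0.
by rewrite (sk v u N hN n).
Qed.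

End Subst.
Unset Implicit Arguments.

Theorem theorem4p10 (R : realType) (L0 L1 : lmodType R[i])
  (dL0 : L0 -> L0) (dL1 : L1 -> L1)
  (d : L1 -> L0) (b0 : L0 -> L0 -> nat -> L0) (b1 : L1 -> L1 -> nat -> L1)
  (rho : L0 -> L1 -> nat -> L1) (rho' : L1 -> L0 -> nat -> L1)
  (N0 : L0 -> L0) (N1 : L1 -> L1) :
  (Strict2NijLinf dL0 dL1 d b0 rho rho' N0 N1 /\
     b1 = (fun m m' => rho (d m) m'))
  <->
  (NijCrossedModule dL0 dL1 b0 N0 b1 N1 d rho /\ skew_rel dL1 rho' rho).
Proof.
split.
  move=> [[[hdm0 hdm1 hd hN0 hN1] [[bl0 blr blr'] [fs0 fsr fsr']] [ss0 ssr ssr']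
     [sk1 sk0 dt eqd] [jac0 jacr dN nij0 nijr]] ->].
  have skr' := skew_flip hdm1 fsr' sk1.
  split=> //; split.
  - by split; split.
  - split; split.
    + done.
    + split => c x y v n /=; first by rewrite hd.1; exact: blr.1.
      exact: blr.2.
    + by move=> u v; exact: fsr.
    + split => u v n /=; first by rewrite hd.2; exact: ssr.1.
      exact: ssr.2.
    + split.
        move=> u v N hN k /=; rewrite eqd; exact: skr'.
      move=> p q x n m /=; rewrite jacr; congr (_ + _).
      by apply: eq_bigr => i _; rewrite dt.
    + done.
    + by move=> p x n /=; rewrite dN; exact: nijr.
  - by split=> // x y n /=; exact: dt.
  - by split=> //; split.
  - by split.
move=> [[[[hdm0 bl0 fs0 ss0 [sk0 jac0]] [hN0 nij0]] [[hdm1 bl1 fs1 ss1 [sk1 jac1]] [hN1 nij1]]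
   [hd dt dN] [[hdm1' blr fsr ssr jacr] hN1' nijr] [tr trb]] skr'].
have eb1 : b1 = (fun m m' => rho (d m) m').
  apply: functional_extensionality => m; apply: functional_extensionality => m'.
  by apply: functional_extensionality => n; rewrite trb.
split=> //; split.
- by split.
- split; split=> //.
    + exact (skew_bilin hdm1 blr fsr skr').
    + exact (skew_finsupp skr' fsr).
- split=> //; exact (skew_sesq hdm1 ssr fsr skr').
- split=> //.
  + exact (skew_flip hdm1 fsr skr').
  + move=> m m' n; have [N hN] := fsr (d m') m.
    rewrite (skr' m (d m') N hN n) trb (sk1 m m' N).
      by congr (- _); apply: subst_eq => k; rewrite trb.
    by move=> k hk; rewrite -trb; exact: hN.
- by split.
Qed.
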